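(* For every $k\ge1$ and every $l\in\{1,\dots,k+1\}$, \[i(\alpha)(\mathcal{F}_{k,l})\subset\mathcal{F}_{k-1,l-1}\qquad\text{and}\qquad X(\mathcal{F}_{k-1,l-1})\subset\mathcal{F}_{k,l}.\]
   Context: Let $n\ge1$, $M=\mathbb{R}^{2n+1}$ with coordinates $(q^1,\dots,q^n,p^1,\dots,p^n,t)$. For $\mu\in\mathbb{R}$, $\mathcal{S}^k_\mu$ denotes the space of smooth functions $S(x,\xi)$ on $M\times\mathbb{R}^{2n+1}$ homogeneous polynomial of degree $k$ in $\xi=(\xi_{q^1},\dots,\xi_{q^n},\xi_{p^1},\dots,\xi_{p^n},\xi_t)$. Fix $\delta\in\mathbb{R}$ and set $R^k=\mathcal{S}^k_{\delta+\frac{k}{n+1}}$ for $k\ge0$, $R^{j}=0$ for $j<0$. Let $E_s=\sum_i(p^i\partial_{p^i}+q^i\partial_{q^i})$, $\langle E_s,\xi\rangle=\sum_i(p^i\xi_{p^i}+q^i\xi_{q^i})$, $D(S)=\sum_i(\xi_{q^i}\partial_{p^i}S-\xi_{p^i}\partial_{q^i}S)+\xi_tE_s(S)-\langle E_s,\xi\rangle\partial_tS$. Operators: $i(\alpha):R^k\to R^{k-1}$, $i(\alpha)(S)=\frac12\big(\sum_i(p^i\partial_{\xi_{q^i}}S-q^i\partial_{\xi_{p^i}}S)-\partial_{\xi_t}S\big)$; $X:R^k\to R^{k+1}$, $X(S)=D(S)+(2(n+1)\delta+k)\xi_tS$. For $k\ge0$, $l\ge0$, $\mathcal{F}_{k,l}=R^k\cap\ker\big(i(\alpha)^l\big)$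 (so $\mathcal{F}_{k,0}=0$ and $\mathcal{F}_{k,k+1}=R^k$). *)

(* Defs.v *)
From HB Require Import structures.
From mathcomp Require Import all_boot all_order all_algebra.
From mathcomp Require Import all_classical all_reals all_analysis.
Set Implicit Arguments. Unset Strict Implicit. Unset Printing Implicit Defensive.
Import Order.TTheory GRing.Theory Num.Theory.
Import numFieldNormedType.Exports.
Local Open Scope ring_scope.

Section Contact.
Variable R : realType.
Variable n : nat.

(* dimension of M = R^(2n+1); coordinates ordered (q^1..q^n, p^1..p^n, t) *)
Definition dimM := (n + n + 1)%N.
Definition pt := 'rV[R]_dimM.

Definition qI (i : 'I_n) : 'I_dimM := lshift 1 (lshift n i).
Definition pI (i : 'I_n) : 'I_dimM := lshift 1 (rshift n i).
Definition tI : 'I_dimM := rshift (n + n) (@ord0 0).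

Definition ev (j : 'I_dimM) : pt := delta_mx 0 j.

Definition pdiff (j : 'I_dimM) (f : pt -> R) : pt -> R :=
  fun x => derive1 (fun s : R => f (x + s *: ev j)) 0.

Fixpoint iter_pdiff (js : seq 'I_dimM) (f : pt -> R) : pt -> R :=
  match js with
  | [::] => f
  | j :: js' => pdiff j (iter_pdiff js' f)
  end.

Definition smooth (f : pt -> R) : Prop :=
  (forall js, continuous (iter_pdiff js f)) /\
  (forall js j x, derivable (fun s : R => iter_pdiff js f (x + s *: ev j)) 0 1).

(* exponent vectors of monomials of degree k in xi *)
Definition monomial (k : nat) := {ffun 'I_dimM -> 'I_k.+1}.
Definition mdeg k (m : monomial k) : nat := (\sum_(j < dimM) (m j : nat))%N.

(* functions S(x, xi) on M x R^(2n+1) *)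
Definition symb := pt -> pt -> R.

(* R^k = S^k_mu as a space of functions: smooth, homogeneous polynomial of
   degree k in xi (equivalently: polynomial in xi with smooth coefficients) *)
Definition Rk (k : nat) (S : symb) : Prop :=
  exists c : monomial k -> pt -> R,
    (forall m, smooth (c m)) /\
    forall x xi, S x xi =
      \sum_(m : monomial k | mdeg m == k) c m x * \prod_(j < dimM) xi 0 j ^+ m j.

Definition dx (j : 'I_dimM) (S : symb) : symb :=
  fun x xi => pdiff j (fun y => S y xi) x.
Definition dxi (j : 'I_dimM) (S : symb) : symb :=
  fun x xi => pdiff j (fun eta => S x eta) xi.

Definition Es (S : symb) : symb := fun x xi =>
  \sum_(i < n) (x 0 (pI i) * dx (pI i) S x xi + x 0 (qI i) * dx (qI i) S x xi).

Definition Esxi (x xi : pt) : R :=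
  \sum_(i < n) (x 0 (pI i) * xi 0 (pI i) + x 0 (qI i) * xi 0 (qI i)).

Definition Dop (S : symb) : symb := fun x xi =>
  \sum_(i < n) (xi 0 (qI i) * dx (pI i) S x xi - xi 0 (pI i) * dx (qI i) S x xi)
  + xi 0 tI * Es S x xi - Esxi x xi * dx tI S x xi.

Definition ialpha (S : symb) : symb := fun x xi =>
  2^-1 * (\sum_(i < n) (x 0 (pI i) * dxi (qI i) S x xi
                        - x 0 (qI i) * dxi (pI i) S x xi)
          - dxi tI S x xi).

(* X on R^k (k is the degree of the argument) *)
Definition Xop (delta : R) (k : nat) (S : symb) : symb := fun x xi =>
  Dop S x xi + (2 * (n.+1)%:R * delta + k%:R) * xi 0 tI * S x xi.

Definition Fkl (k l : nat) (S : symb) : Prop :=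
  Rk k S /\ forall x xi, iter l ialpha S x xi = 0.

End Contact.

(* Main.v *)
Require Import Defs.
From HB Require Import structures.
From mathcomp Require Import all_boot all_order all_algebra.
From mathcomp Require Import all_classical all_reals all_analysis.
From mathcomp Require Import ring.
Set Implicit Arguments. Unset Strict Implicit. Unset Printing Implicit Defensive.
Import Order.TTheory GRing.Theory Num.Theory.
Import numFieldNormedType.Exports.
Local Open Scope ring_scope.

Section Infra.
Variable R : realType.
Variable n : nat.
Local Notation P := (pt R n).
Local Notation D := (dimM n).
Implicit Types (f g : P -> R) (y xi : P).

Definition HD (j : 'I_D) (F : P -> R) (y : P) (d : R) :=
  is_derive (0:R) (1:R) (fun s : R => F (y + s *: ev R j)) d.

Lemma HD_pdiff j F y d : HD j F y d -> pdiff j F y = d.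
Proof. by move=> h; rewrite /pdiff derive1E; apply: derive_val. Qed.

Lemma HD_derivable j F y d : HD j F y d ->
  derivable (fun s : R => F (y + s *: ev R j)) 0 1.
Proof. by case. Qed.

Lemma entryE (y : P) (s : R) (j a : 'I_D) :
  (y + s *: ev R j) 0 a = y 0 a + s * (j == a)%:R.
Proof. by rewrite !mxE eqxx /= eq_sym. Qed.

Lemma HD_ext j F G y d : (forall s : R, F (y + s *: ev R j) = G (y + s *: ev R j)) ->
  HD j F y d -> HD j G y d.
Proof.
move=> e h; rewrite /HD.
by have <- : (fun s : R => F (y + s *: ev R j)) = (fun s => G (y + s *: ev R j))
  by apply/funext => s; apply: e.
Qed.

Lemma HD_cst j y (c : R) : HD j (fun _ => c) y 0.
Proof. exact: is_derive_cst. Qed.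

Lemma HD_add j F G y dF dG : HD j F y dF -> HD j G y dG ->
  HD j (fun z => F z + G z) y (dF + dG).
Proof. by move=> hF hG; have := is_deriveD hF hG. Qed.

Lemma HD_mul j F G y dF dG : HD j F y dF -> HD j G y dG ->
  HD j (fun z => F z * G z) y (F y * dG + G y * dF).
Proof.
move=> hF hG.
have -> : F y * dG + G y * dF = ((fun s : R => F (y + s *: ev R j)) 0 *: dG
   + (fun s : R => G (y + s *: ev R j)) 0 *: dF) by rewrite /= scale0r addr0.
exact: is_deriveM.
Qed.

Lemma HD_opp j F y dF : HD j F y dF -> HD j (fun z => - F z) y (- dF).
Proof. by move=> hF; have := is_deriveN hF. Qed.

Lemma HD_sub j F G y dF dG : HD j F y dF -> HD j G y dG ->
  HD j (fun z => F z - G z) y (dF - dG).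
Proof. by move=> hF hG; apply: HD_add => //; apply: HD_opp. Qed.

Lemma HD_scale j F y dF (c : R) : HD j F y dF -> HD j (fun z => c * F z) y (c * dF).
Proof.
move=> hF; apply: is_derive_eq; first exact: (HD_mul (HD_cst j y c) hF).
by rewrite mulr0 addr0.
Qed.

Lemma HD_sum (I : finType) j (F : I -> P -> R) y dF :
  (forall i, HD j (F i) y (dF i)) -> HD j (fun z => \sum_i F i z) y (\sum_i dF i).
Proof.
move=> h; rewrite /HD.
rewrite (_ : (fun s : R => _) = \sum_i (fun s : R => F i (y + s *: ev R j))); last first.
  by rewrite fct_sumE.
elim/big_ind2: _ => //; first exact: is_derive_cst.
by move=> f1 d1 f2 d2 h1 h2; apply: is_deriveD.
by move=> i _; apply: h.
Qed.

Lemma HD_coord j y (a : 'I_D) : HD j (fun z => z 0 a) y (j == a)%:R.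
Proof.
rewrite /HD.
have -> : (fun s : R => (y + s *: ev R j) 0 a) = (fun s => y 0 a + s * (j == a)%:R).
  by apply/funext => s; rewrite entryE.
have h := is_deriveD (is_derive_cst (y 0 a) (0:R) (1:R))
  (is_deriveM (@is_derive_id _ _ (0:R) (1:R)) (is_derive_cst ((j == a)%:R : R) (0:R) (1:R))).
rewrite (_ : (fun s : R => _) = cst (y 0 a) + (@id R) * cst ((j == a)%:R : R)) //.
eapply is_derive_eq; [exact h|].
by rewrite /= scaler0 !add0r -[LHS]/(_ * 1) mulr1.
Qed.


Lemma HD_smooth f j y : smooth f -> HD j f y (pdiff j f y).
Proof. by case=> _ h; rewrite /HD /pdiff derive1E; apply: derivableP (h [::] j y). Qed.

Lemma smooth_cont f : smooth f -> continuous f.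
Proof. by case=> h _; apply: (h [::]). Qed.

Lemma iter_pdiff_rcons js j f : iter_pdiff (rcons js j) f = iter_pdiff js (pdiff j f).
Proof. by elim: js => //= a js ->. Qed.

Lemma smooth_pdiff j f : smooth f -> smooth (pdiff j f).
Proof.
by case=> h1 h2; split => [js | js j' x]; rewrite -iter_pdiff_rcons; [apply: h1|apply: h2].
Qed.

Lemma smooth_ext f g : (forall y, f y = g y) -> smooth f -> smooth g.
Proof. by move=> e; have <- : f = g by apply/funext. Qed.

Lemma pdiff_cst j (c : R) : pdiff j (fun _ : P => c) = fun _ => 0.
Proof. by apply/funext => y; apply: HD_pdiff; apply: HD_cst. Qed.

Lemma pdiff_coord j a : pdiff j (fun z : P => z 0 a) = fun _ => (j == a)%:R.
Proof. by apply/funext => y; apply: HD_pdiff; apply: HD_coord. Qed.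

Lemma smooth_cst (c : R) : smooth (fun _ : P => c).
Proof.
have e : forall js, exists c', iter_pdiff js (fun _ : P => c) = fun _ => c'.
  elim=> [|j js [c' IH]] /=; first by exists c.
  by exists 0; rewrite IH; apply: pdiff_cst.
split => [js|js j x]; have [c' ->] := e js; first exact: cst_continuous.
exact: derivable_cst.
Qed.

Lemma smooth_coord a : smooth (fun z : P => z 0 a).
Proof.
have e : forall js, iter_pdiff js (fun z : P => z 0 a) = (fun z => z 0 a) \/
   exists c, iter_pdiff js (fun z : P => z 0 a) = fun _ => c.
  elim=> [|j js [IH|[c IH]]] /=; first by left.
    by right; exists (j == a)%:R; rewrite IH; apply: pdiff_coord.
  by right; exists 0; rewrite IH; apply: pdiff_cst.
split => [js|js j x]; case: (e js) => [->|[c ->]].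
- exact: coord_continuous.
- exact: cst_continuous.
- exact: HD_derivable (HD_coord _ _ _).
- exact: derivable_cst.
Qed.

Definition sumP (I : finType) (a b : I -> P -> R) : P -> R :=
  fun y => \sum_i a i y * b i y.

Lemma pdiff_sumP (I : finType) (a b : I -> P -> R) j :
  (forall i, smooth (a i) /\ smooth (b i)) ->
  pdiff j (sumP a b) = sumP (I := (I + I)%type)
    (fun k => match k with inl i => pdiff j (a i) | inr i => a i end)
    (fun k => match k with inl i => b i | inr i => pdiff j (b i) end).
Proof.
move=> h; apply/funext => y.
rewrite (HD_pdiff (HD_sum (fun i => HD_mul (HD_smooth j y (h i).1) (HD_smooth j y (h i).2)))).
rewrite /sumP big_sumType /= -big_split /=; apply: eq_bigr => i _.
by rewrite addrC mulrC [X in _ + X]mulrC.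
Qed.

Lemma smooth_sumP (I : finType) (a b : I -> P -> R) :
  (forall i, smooth (a i) /\ smooth (b i)) -> smooth (sumP a b).
Proof.
have key : forall js (I : finType) (a b : I -> P -> R),
    (forall i, smooth (a i) /\ smooth (b i)) ->
    exists (I' : finType) (a' b' : I' -> P -> R),
      (forall i, smooth (a' i) /\ smooth (b' i)) /\ iter_pdiff js (sumP a b) = sumP a' b'.
  elim=> [|j js IH] I0 a0 b0 h /=; first by exists I0, a0, b0.
  have [I' [a' [b' [h' ->]]]] := IH I0 a0 b0 h.
  rewrite pdiff_sumP //; eexists; eexists; eexists; split; last reflexivity.
  by case=> i /=; case: (h' i) => h1 h2; split; try apply: smooth_pdiff.
move=> h; split => [js|js j x]; have [I' [a' [b' [h' ->]]]] := key js I a b h.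
- move=> y; rewrite /sumP.
  rewrite (_ : (fun y => \sum_i a' i y * b' i y) = \sum_i (a' i \* b' i)); last first.
    by rewrite fct_sumE.
  elim/big_ind: _ => //; first exact: cst_continuous.
    by move=> f g; apply: continuousD.
  by move=> i _; case: (h' i) => h1 h2; apply: continuousM; apply: smooth_cont.
- apply: HD_derivable; apply: HD_sum => i; case: (h' i) => h1 h2.
  by apply: HD_mul; apply: HD_smooth.
Qed.

Lemma smooth_mul f g : smooth f -> smooth g -> smooth (fun y => f y * g y).
Proof.
move=> hf hg; apply: (@smooth_ext (sumP (I := 'I_1) (fun _ => f) (fun _ => g))).
  by move=> y; rewrite /sumP big_ord1.
by apply: smooth_sumP.
Qed.

Lemma smooth_sum (I : finType) (F : I -> P -> R) :
  (forall i, smooth (F i)) -> smooth (fun y => \sum_i F i y).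
Proof.
move=> h; apply: (@smooth_ext (sumP F (fun _ _ => 1))).
  by move=> y; rewrite /sumP; apply: eq_bigr => i _; rewrite mulr1.
apply: smooth_sumP => i; split => //; exact: smooth_cst.
Qed.

Lemma smooth_add f g : smooth f -> smooth g -> smooth (fun y => f y + g y).
Proof.
move=> hf hg; apply: (@smooth_ext (fun y => \sum_(b : bool) (if b then f else g) y)).
  by move=> y; rewrite big_bool.
by apply: smooth_sum => -[].
Qed.

Lemma smooth_scale (c : R) f : smooth f -> smooth (fun y => c * f y).
Proof. by move=> hf; apply: smooth_mul => //; apply: smooth_cst. Qed.


Lemma HD_eq j F y d d' : HD j F y d -> d = d' -> HD j F y d'.
Proof. by move=> h <-. Qed.

Lemma HD_X j F y d (m : nat) : HD j F y d ->
  HD j (fun z => F z ^+ m) y (m%:R * F y ^+ m.-1 * d).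
Proof.
move=> h.
have -> : m%:R * F y ^+ m.-1 * d =
  (m%:R * (fun s : R => F (y + s *: ev R j)) 0 ^+ m.-1) *: d by rewrite /= scale0r addr0.
rewrite /HD -(exprfctE (fun s : R => F (y + s *: ev R j))).
exact: is_deriveX.
Qed.

Definition Ex := {ffun 'I_D -> nat}.
Implicit Types (e : Ex) (x : P).
Definition mon (e : Ex) (xi : P) : R := \prod_(j < D) xi 0 j ^+ e j.
Definition deg (e : Ex) : nat := (\sum_(j < D) e j)%N.
Definition decr (e : Ex) (j : 'I_D) : Ex := [ffun i => if i == j then (e i).-1 else e i].
Definition incr (e : Ex) (a : 'I_D) : Ex := [ffun i => (e i + (i == a))%N].
Definition dmon (e : Ex) (j : 'I_D) (xi : P) : R := (e j)%:R * mon (decr e j) xi.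

Lemma mon_split e j xi :
  mon e xi = xi 0 j ^+ e j * \prod_(i < D | i != j) xi 0 i ^+ e i.
Proof. by rewrite /mon (bigD1 j). Qed.

Lemma HD_mon e j xi : HD j (mon e) xi (dmon e j xi).
Proof.
apply: (@HD_ext j (fun z => z 0 j ^+ e j * \prod_(i < D | i != j) xi 0 i ^+ e i)).
  move=> s; rewrite (mon_split _ j); congr (_ * _); apply: eq_bigr => i hi.
  by rewrite entryE eq_sym (negbTE hi) mulr0 addr0.
apply: HD_eq; first by apply: HD_mul; [apply: HD_X; apply: HD_coord | apply: HD_cst].
rewrite /dmon (mon_split _ j) ffunE !eqxx.
have -> : \prod_(i < D | i != j) xi 0 i ^+ decr e j i = \prod_(i < D | i != j) xi 0 i ^+ e i.
  by apply: eq_bigr => i hi; rewrite ffunE (negbTE hi).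
rewrite mulr0 add0r /= mulr1; ring.
Qed.

Lemma mon_euler e j xi : xi 0 j * dmon e j xi = (e j)%:R * mon e xi.
Proof.
rewrite /dmon (mon_split (decr e j) j) (mon_split e j) ffunE eqxx.
rewrite (eq_bigr (fun i => xi 0 i ^+ e i)) => [|i hi]; last by rewrite ffunE (negbTE hi).
case: (e j) => [|m] /=; first by rewrite !mul0r mulr0.
by rewrite exprS; ring.
Qed.

Lemma mon_incr e a xi : mon (incr e a) xi = xi 0 a * mon e xi.
Proof.
rewrite (mon_split _ a) (mon_split e a) ffunE eqxx addn1 exprS.
rewrite (eq_bigr (fun i => xi 0 i ^+ e i)) => [|i hi]; last by rewrite ffunE (negbTE hi) addn0.
by rewrite mulrA.
Qed.

Lemma deg_incr e a : deg (incr e a) = (deg e).+1.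
Proof.
rewrite /deg (bigD1 a) //= [in RHS](bigD1 a) //= ffunE eqxx.
rewrite (eq_bigr (fun i => e i)) => [|i hi]; last by rewrite ffunE (negbTE hi) addn0.
by rewrite addn1 addSn.
Qed.

Lemma deg_decr e j : (0 < e j)%N -> deg (decr e j) = (deg e).-1.
Proof.
move=> h; rewrite /deg (bigD1 j) //= [in RHS](bigD1 j) //= ffunE eqxx.
rewrite (eq_bigr (fun i => e i)) => [|i hi]; last by rewrite ffunE (negbTE hi).
by case: (e j) h.
Qed.

Lemma le_deg e j : (e j <= deg e)%N.
Proof. by rewrite /deg (bigD1 j) //= leq_addr. Qed.

Definition repv (I : finType) (c : I -> P -> R) (e : I -> Ex) : symb R n :=
  fun x xi => \sum_i c i x * mon (e i) xi.

Definition Grep (k : nat) (S : symb R n) := exists (I : finType) (c : I -> P -> R) (e : I -> Ex),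
  (forall i, smooth (c i) /\ deg (e i) = k) /\ S = repv c e.

Lemma G_ext k (S T : symb R n) : (forall x xi, S x xi = T x xi) -> Grep k S -> Grep k T.
Proof. by move=> h; have <- : S = T by apply/funext=> x; apply/funext=> xi; apply: h. Qed.

Lemma G0 k : Grep k (fun _ _ => 0).
Proof.
exists void, (fun _ _ => 0), (fun _ => [ffun _ => 0%N]); split; first by case.
by apply/funext=> x; apply/funext=> xi; rewrite /repv big1 // => -[].
Qed.

Lemma G_add k (S T : symb R n) : Grep k S -> Grep k T -> Grep k (fun x xi => S x xi + T x xi).
Proof.
move=> [I [c [e [h ->]]]] [J [c' [e' [h' ->]]]].
exists (I + J)%type, (fun q => match q with inl i => c i | inr j => c' j end),
  (fun q => match q with inl i => e i | inr j => e' j end); split; first by case.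
by apply/funext => x; apply/funext => xi; rewrite /repv big_sumType.
Qed.

Lemma G_mulf k (S : symb R n) f : smooth f -> Grep k S -> Grep k (fun x xi => f x * S x xi).
Proof.
move=> hf [I [c [e [h ->]]]]; exists I, (fun i x => f x * c i x), e; split.
  by move=> i; case: (h i) => h1 h2; split => //; apply: smooth_mul.
apply/funext=> x; apply/funext=> xi; rewrite /repv mulr_sumr; apply: eq_bigr => i _.
by rewrite mulrA.
Qed.

Lemma G_xi k (S : symb R n) a : Grep k S -> Grep k.+1 (fun x xi => xi 0 a * S x xi).
Proof.
move=> [I [c [e [h ->]]]]; exists I, c, (fun i => incr (e i) a); split.
  by move=> i; case: (h i) => h1 h2; rewrite deg_incr h2.
apply/funext=> x; apply/funext=> xi; rewrite /repv mulr_sumr; apply: eq_bigr => i _.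
by rewrite mon_incr mulrCA.
Qed.

Lemma HD_repv_x (I : finType) (c : I -> P -> R) (e : I -> Ex) a x xi : (forall i, smooth (c i)) ->
  HD a (fun y => repv c e y xi) x (repv (fun i => pdiff a (c i)) e x xi).
Proof.
move=> h; apply: HD_eq.
  by apply: HD_sum => i; apply: HD_mul; [apply: HD_smooth; apply: h | apply: HD_cst].
by apply: eq_bigr => i _; rewrite mulr0 add0r mulrC.
Qed.

Lemma dx_repv (I : finType) (c : I -> P -> R) (e : I -> Ex) a : (forall i, smooth (c i)) ->
  dx a (repv c e) = repv (fun i => pdiff a (c i)) e.
Proof.
by move=> h; apply/funext=> x; apply/funext=> xi; apply: HD_pdiff; apply: HD_repv_x.
Qed.

Lemma HD_repv_xi (I : finType) (c : I -> P -> R) (e : I -> Ex) j x xi :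
  HD j (repv c e x) xi (\sum_i c i x * dmon (e i) j xi).
Proof.
apply: HD_eq.
  by apply: HD_sum => i; apply: HD_mul; [apply: HD_cst | apply: HD_mon].
by apply: eq_bigr => i _; rewrite mulr0 addr0.
Qed.

Lemma dxi_repv (I : finType) (c : I -> P -> R) (e : I -> Ex) j :
  dxi j (repv c e) = fun x xi => \sum_i c i x * dmon (e i) j xi.
Proof.
by apply/funext=> x; apply/funext=> xi; apply: HD_pdiff; apply: HD_repv_xi.
Qed.

Lemma G_dx k (S : symb R n) a : Grep k S -> Grep k (dx a S).
Proof.
move=> [I [c [e [h ->]]]]; exists I, (fun i => pdiff a (c i)), e; split.
  by move=> i; case: (h i) => h1 h2; split => //; apply: smooth_pdiff.
by apply: dx_repv => i; case: (h i).
Qed.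

Lemma G_dxi k (S : symb R n) j : Grep k S -> Grep k.-1 (dxi j S).
Proof.
move=> [I [c [e [h ->]]]].
pose e0 : Ex := [ffun i : 'I_D => if i == tI n then k.-1 else 0%N].
exists I, (fun i x => (e i j)%:R * c i x),
  (fun i => if (0 < e i j)%N then decr (e i) j else e0); split.
  move=> i; case: (h i) => h1 h2; split; first by apply: smooth_scale.
  case: ifP => hp; first by rewrite deg_decr // h2.
  rewrite /deg (bigD1 (tI n)) //= ffunE eqxx big1 ?addn0 // => i0 hi.
  by rewrite ffunE (negbTE hi).
rewrite dxi_repv; apply/funext=> x; apply/funext=> xi; rewrite /repv.
apply: eq_bigr => i _; rewrite /dmon; case: ifP => hp; first by rewrite mulrCA mulrA.
by move/negbT: hp; rewrite -leqNgt leqn0 => /eqP ->; rewrite !mul0r mulr0.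
Qed.

Lemma G_sumn k m (F : 'I_m -> symb R n) :
  (forall i, Grep k (F i)) -> Grep k (fun x xi => \sum_(i < m) F i x xi).
Proof.
elim: m F => [|m IH] F h.
  by apply: (G_ext _ (G0 k)) => x xi; rewrite big_ord0.
apply: (@G_ext k (fun x xi => (\sum_(i < m) F (widen_ord (leqnSn m) i) x xi) + F ord_max x xi)).
  by move=> x xi; rewrite big_ord_recr.
by apply: G_add; [apply: IH => i; apply: h | apply: h].
Qed.

Lemma G_scale k (S : symb R n) (c : R) : Grep k S -> Grep k (fun x xi => c * S x xi).
Proof. by move=> h; apply: (G_mulf (f := fun _ => c)) => //; apply: smooth_cst. Qed.

Lemma G_sub k (S T : symb R n) : Grep k S -> Grep k T -> Grep k (fun x xi => S x xi - T x xi).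
Proof.
move=> hS hT; apply: (@G_ext k (fun x xi => S x xi + (-1) * T x xi)).
  by move=> x xi; rewrite mulN1r.
by apply: G_add => //; apply: G_scale.
Qed.

Lemma G_coord k (S : symb R n) b : Grep k S -> Grep k (fun x xi => x 0 b * S x xi).
Proof. by apply: G_mulf; apply: smooth_coord. Qed.

Lemma HD_G_xi k (S : symb R n) j x xi : Grep k S -> HD j (S x) xi (dxi j S x xi).
Proof.
move=> [I [c [e [h ->]]]]; rewrite dxi_repv; exact: HD_repv_xi.
Qed.

Lemma HD_G_x k (S : symb R n) a x xi : Grep k S -> HD a (fun y => S y xi) x (dx a S x xi).
Proof.
move=> [I [c [e [h ->]]]]; rewrite dx_repv; last by move=> i; case: (h i).
by apply: HD_repv_x => i; case: (h i).
Qed.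

Definition emb k (m : monomial n k) : Ex := [ffun j => nat_of_ord (m j)].

Lemma Rk_G k (S : symb R n) : Rk k S -> Grep k S.
Proof.
case=> c [hc hS].
pose e0 : Ex := [ffun i : 'I_D => if i == tI n then k else 0%N].
have de0 : deg e0 = k.
  rewrite /deg (bigD1 (tI n)) //= ffunE eqxx big1 ?addn0 // => i0 hi.
  by rewrite ffunE (negbTE hi).
exists (monomial n k), (fun m => if mdeg m == k then c m else (fun _ => 0)),
  (fun m => if mdeg m == k then emb m else e0); split.
  move=> m; case: ifP => hm; split => //; last exact: smooth_cst.
  transitivity (mdeg m); last exact/eqP.
  by rewrite /deg /mdeg; apply: eq_bigr => j _; rewrite ffunE.
apply/funext => x; apply/funext => xi; rewrite hS /repv big_mkcond /=.
apply: eq_bigr => m _; case: ifP => hm; last by rewrite mul0r.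
by congr (_ * _); apply: eq_bigr => j _; rewrite ffunE.
Qed.

Lemma G_Rk k (S : symb R n) : Grep k S -> Rk k S.
Proof.
case=> I [c [e [h ->]]].
exists (fun m x => \sum_i (if e i == emb m then c i else (fun _ => 0)) x); split.
  move=> m; apply: smooth_sum => i; case: ifP => _; last exact: smooth_cst.
  by case: (h i).
move=> x xi; rewrite /repv.
rewrite (eq_bigr (fun m => \sum_i (if e i == emb m then c i x else 0) * mon (emb m) xi)); last first.
  move=> m _; rewrite mulr_suml; apply: eq_bigr => i _; congr (_ * _).
    by case: ifP.
  by apply: eq_bigr => j _; rewrite ffunE.
rewrite exchange_big /=; apply: eq_bigr => i _.
pose m0 : monomial n k := [ffun j => inord (e i j)].
have hm0 : forall j, nat_of_ord (m0 j) = e i j.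
  move=> j; rewrite ffunE inordK // ltnS; case: (h i) => _ <-; exact: le_deg.
have em0 : emb m0 = e i by apply/ffunP => j; rewrite ffunE hm0.
have dm0 : mdeg m0 == k.
  case: (h i) => _ hk; apply/eqP; rewrite -[RHS]hk /mdeg /deg; apply: eq_bigr => j _; exact: hm0.
rewrite (bigD1 m0) //= em0 eqxx big1 ?addr0 // => m /andP [_ hm].
case: eqP => [he|]; last by rewrite mul0r.
exfalso; move/negP: hm; apply; apply/eqP/ffunP => j.
by apply: val_inj; rewrite /= hm0 he ffunE.
Qed.

Lemma euler k (S : symb R n) x xi : Grep k S ->
  \sum_(j < D) xi 0 j * dxi j S x xi = k%:R * S x xi.
Proof.
move=> [I [c [e [h ->]]]].
rewrite (eq_bigr (fun j => \sum_i c i x * (xi 0 j * dmon (e i) j xi))) => [|j _]; last first.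
  by rewrite dxi_repv mulr_sumr; apply: eq_bigr => i _; rewrite mulrCA.
rewrite exchange_big /repv mulr_sumr; apply: eq_bigr => i _.
rewrite (eq_bigr (fun j => c i x * ((e i j)%:R * mon (e i) xi))) => [|j _]; last by rewrite mon_euler.
rewrite -mulr_sumr -mulr_suml -natr_sum.
case: (h i) => _ <-; rewrite /deg; ring.
Qed.

Lemma mixed k (S : symb R n) j a x xi : Grep k S ->
  dxi j (dx a S) x xi = dx a (dxi j S) x xi.
Proof.
move=> [I [c [e [h ->]]]].
have hc : forall i, smooth (c i) by move=> i; case: (h i).
rewrite dx_repv // !dxi_repv; symmetry; apply: HD_pdiff; apply: HD_eq.
  by apply: HD_sum => i; apply: HD_mul; [apply: HD_smooth; apply: hc | apply: HD_cst].
by apply: eq_bigr => i _; rewrite mulr0 add0r mulrC.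
Qed.


End Infra.
Ltac gen_atoms :=
  repeat match goal with
  | |- context [dx ?a ?S ?x ?xi] => generalize (dx a S x xi); intro
  | |- context [dxi ?a ?S ?x ?xi] => generalize (dxi a S x xi); intro
  | |- context [Dop ?S ?x ?xi] => generalize (Dop S x xi); intro
  | |- context [Es ?S ?x ?xi] => generalize (Es S x xi); intro
  | |- context [Esxi ?x ?xi] => generalize (Esxi x xi); intro
  | |- context [bigop ?a ?b ?c] => generalize (bigop a b c); intro
  end.

Section Calc.
Variable R : realType.
Variable n : nat.
Local Notation P := (pt R n).
Local Notation D := (dimM n).
Implicit Types (f g : P -> R) (y x xi : P).
Local Notation tI := (tI n).

Lemma eq_qq (i i' : 'I_n) : (qI i == qI i') = (i == i').
Proof. by apply/eqP/eqP => [/(congr1 val) /= /val_inj| ->]. Qed.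
Lemma eq_pp (i i' : 'I_n) : (pI i == pI i') = (i == i').
Proof.
apply/eqP/eqP => [h | -> //]; apply: val_inj; move/(congr1 val): h => /= /eqP.
by rewrite eqn_add2l => /eqP.
Qed.
Lemma eq_qp (i i' : 'I_n) : (qI i == pI i') = false.
Proof.
apply/eqP => /(congr1 val) /= h; have := ltn_ord i; rewrite h.
by rewrite ltnNge leq_addr.
Qed.
Lemma eq_pq (i i' : 'I_n) : (pI i == qI i') = false.
Proof. by rewrite eq_sym eq_qp. Qed.
Lemma eq_qt (i : 'I_n) : (qI i == tI) = false.
Proof.
apply/eqP => /(congr1 val) /= h; have := ltn_ord i; rewrite h addn0.
by rewrite ltnNge leq_addr.
Qed.
Lemma eq_pt (i : 'I_n) : (pI i == tI) = false.
Proof.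
apply/eqP => /(congr1 val) /= /eqP; rewrite addn0 eqn_add2l => /eqP h.
by have := ltn_ord i; rewrite h ltnn.
Qed.
Lemma eq_tq (i : 'I_n) : (tI == qI i) = false.
Proof. by rewrite eq_sym eq_qt. Qed.
Lemma eq_tp (i : 'I_n) : (tI == pI i) = false.
Proof. by rewrite eq_sym eq_pt. Qed.

Lemma sumD (F : 'I_D -> R) :
  \sum_(j < D) F j = \sum_(i < n) F (qI i) + \sum_(i < n) F (pI i) + F tI.
Proof. by rewrite big_split_ord /= big_split_ord /= big_ord1. Qed.

Lemma sum_delta (i0 : 'I_n) (F : 'I_n -> R) : \sum_i (i0 == i)%:R * F i = F i0.
Proof.
rewrite (bigD1 i0) //= eqxx mul1r big1 ?addr0 // => i hi.
by rewrite eq_sym (negbTE hi) mul0r.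
Qed.

Lemma sum_deltar (i0 : 'I_n) (F : 'I_n -> R) : \sum_i F i * (i0 == i)%:R = F i0.
Proof. by rewrite -[RHS](sum_delta i0); apply: eq_bigr => i _; rewrite mulrC. Qed.

Definition Xc (c : R) (S : symb R n) : symb R n :=
  fun x xi => Dop S x xi + c * xi 0 tI * S x xi.

Lemma G_Es k (S : symb R n) : Grep k S -> Grep k (Es S).
Proof.
move=> hS.
apply: (G_ext (S := fun x xi => \sum_(i < n) (fun i x xi =>
   x 0 (pI i) * dx (pI i) S x xi + x 0 (qI i) * dx (qI i) S x xi) i x xi)) => //.
by apply: G_sumn => i; apply: G_add; apply: G_coord; apply: G_dx.
Qed.

Lemma G_Dop k (S : symb R n) : Grep k S -> Grep k.+1 (Dop S).
Proof.
move=> hS.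
apply: (G_ext (S := fun x xi => (\sum_(i < n) (fun i x xi => xi 0 (qI i) * dx (pI i) S x xi
   - xi 0 (pI i) * dx (qI i) S x xi) i x xi + xi 0 tI * Es S x xi)
   - \sum_(i < n) (fun i x xi => x 0 (pI i) * (xi 0 (pI i) * dx tI S x xi)
   + x 0 (qI i) * (xi 0 (qI i) * dx tI S x xi)) i x xi)).
  move=> x xi; rewrite /Dop /Esxi mulr_suml; congr (_ - _); apply: eq_bigr => i _.
  gen_atoms; ring.
apply: G_sub; first apply: G_add.
- by apply: G_sumn => i; apply: G_sub; apply: G_xi; apply: G_dx.
- by apply: G_xi; apply: G_Es.
- by apply: G_sumn => i; apply: G_add; apply: G_coord; apply: G_xi; apply: G_dx.
Qed.

Lemma G_Xc k (S : symb R n) c : Grep k S -> Grep k.+1 (Xc c S).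
Proof.
move=> hS; apply: (G_ext (S := fun x xi => Dop S x xi + c * (xi 0 tI * S x xi))).
  by move=> x xi; rewrite /Xc mulrA.
by apply: G_add; [apply: G_Dop | apply: G_scale; apply: G_xi].
Qed.

Lemma G_ialpha k (S : symb R n) : Grep k S -> Grep k.-1 (ialpha S).
Proof.
move=> hS; apply: (G_ext (S := fun x xi => 2^-1 * (\sum_(i < n) (fun i x xi =>
  x 0 (pI i) * dxi (qI i) S x xi - x 0 (qI i) * dxi (pI i) S x xi) i x xi
  - dxi tI S x xi))) => //.
apply: G_scale; apply: G_sub; last by apply: G_dxi.
by apply: G_sumn => i; apply: G_sub; apply: G_coord; apply: G_dxi.
Qed.

Lemma HD_Es_xi k (S : symb R n) j x xi : Grep k S -> HD j (Es S x) xi (Es (dxi j S) x xi).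
Proof.
move=> hS; rewrite /Es; apply: HD_eq.
  apply: HD_sum => i; apply: HD_add; apply: HD_mul; try apply: HD_cst;
  apply: HD_G_xi; apply: G_dx; exact: hS.
apply: eq_bigr => i _; rewrite (mixed _ (pI i) _ _ hS) (mixed _ (qI i) _ _ hS).
gen_atoms; ring.
Qed.

Lemma HD_Esxi j x xi : HD j (Esxi x) xi
  (\sum_i (x 0 (pI i) * (j == pI i)%:R + x 0 (qI i) * (j == qI i)%:R)).
Proof.
rewrite /Esxi; apply: HD_eq.
  apply: HD_sum => i; apply: HD_add; apply: HD_mul;
  [apply: HD_cst | apply: HD_coord | apply: HD_cst | apply: HD_coord].
by apply: eq_bigr => i _; gen_atoms; ring.
Qed.

Lemma dxi_Dop k (S : symb R n) j x xi : Grep k S ->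
  dxi j (Dop S) x xi = Dop (dxi j S) x xi
   + (\sum_i ((j == qI i)%:R * dx (pI i) S x xi - (j == pI i)%:R * dx (qI i) S x xi))
   + (j == tI)%:R * Es S x xi
   - (\sum_i (x 0 (pI i) * (j == pI i)%:R + x 0 (qI i) * (j == qI i)%:R)) * dx tI S x xi.
Proof.
move=> hS; apply: HD_pdiff; apply: HD_eq.
  apply: HD_sub; first apply: HD_add.
  - apply: HD_sum => i; apply: HD_sub; apply: HD_mul; try apply: HD_coord;
    apply: HD_G_xi; apply: G_dx; exact: hS.
  - by apply: HD_mul; [apply: HD_coord | apply: HD_Es_xi hS].
  - by apply: HD_mul; [apply: HD_Esxi | apply: HD_G_xi; apply: G_dx; exact: hS].
have e1 : \sum_i (xi 0 (qI i) * dxi j (dx (pI i) S) x xi + dx (pI i) S x xi * (j == qI i)%:R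
      - (xi 0 (pI i) * dxi j (dx (qI i) S) x xi + dx (qI i) S x xi * (j == pI i)%:R))
   = \sum_i (xi 0 (qI i) * dx (pI i) (dxi j S) x xi - xi 0 (pI i) * dx (qI i) (dxi j S) x xi)
   + \sum_i ((j == qI i)%:R * dx (pI i) S x xi - (j == pI i)%:R * dx (qI i) S x xi).
  by rewrite -big_split; apply: eq_bigr => i _ /=; rewrite (mixed _ (pI i) _ _ hS) (mixed _ (qI i) _ _ hS); gen_atoms; ring.
have eD : Dop (dxi j S) x xi = \sum_i (xi 0 (qI i) * dx (pI i) (dxi j S) x xi
   - xi 0 (pI i) * dx (qI i) (dxi j S) x xi) + xi 0 tI * Es (dxi j S) x xi
   - Esxi x xi * dx tI (dxi j S) x xi by [].
rewrite e1 eD (mixed _ tI _ _ hS); gen_atoms; ring.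
Qed.

Lemma dxi_Xc k (S : symb R n) c j x xi : Grep k S ->
  dxi j (Xc c S) x xi = Xc c (dxi j S) x xi
   + (\sum_i ((j == qI i)%:R * dx (pI i) S x xi - (j == pI i)%:R * dx (qI i) S x xi))
   + (j == tI)%:R * (Es S x xi + c * S x xi)
   - (\sum_i (x 0 (pI i) * (j == pI i)%:R + x 0 (qI i) * (j == qI i)%:R)) * dx tI S x xi.
Proof.
move=> hS; apply: HD_pdiff; apply: HD_eq.
  apply: HD_add; first by apply: HD_G_xi; apply: G_Dop; exact: hS.
  by apply: HD_mul; [apply: HD_scale; apply: HD_coord | apply: HD_G_xi; exact: hS].
rewrite (dxi_Dop _ _ _ hS) /Xc; gen_atoms; ring.
Qed.


Lemma K1q k (S : symb R n) c (i0 : 'I_n) x xi : Grep k S ->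
  dxi (qI i0) (Xc c S) x xi = Xc c (dxi (qI i0) S) x xi + dx (pI i0) S x xi
    - x 0 (qI i0) * dx tI S x xi.
Proof.
move=> hS; rewrite (dxi_Xc _ _ _ _ hS).
rewrite (eq_bigr (fun i => (i0 == i)%:R * dx (pI i) S x xi)) => [|i _]; last first.
  by rewrite eq_qq eq_qp mul0r subr0.
rewrite sum_delta.
rewrite (eq_bigr (fun i => x 0 (qI i) * (i0 == i)%:R)) => [|i _]; last first.
  by rewrite eq_qp eq_qq mulr0 add0r.
by rewrite sum_deltar eq_qt mul0r addr0.
Qed.

Lemma K1p k (S : symb R n) c (i0 : 'I_n) x xi : Grep k S ->
  dxi (pI i0) (Xc c S) x xi = Xc c (dxi (pI i0) S) x xi - dx (qI i0) S x xi
    - x 0 (pI i0) * dx tI S x xi.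
Proof.
move=> hS; rewrite (dxi_Xc _ _ _ _ hS).
rewrite (eq_bigr (fun i => - ((i0 == i)%:R * dx (qI i) S x xi))) => [|i _]; last first.
  by rewrite eq_pq eq_pp mul0r add0r.
rewrite sumrN sum_delta.
rewrite (eq_bigr (fun i => x 0 (pI i) * (i0 == i)%:R)) => [|i _]; last first.
  by rewrite eq_pp eq_pq mulr0 addr0.
by rewrite sum_deltar eq_pt mul0r addr0.
Qed.

Lemma K1t k (S : symb R n) c x xi : Grep k S ->
  dxi tI (Xc c S) x xi = Xc c (dxi tI S) x xi + (Es S x xi + c * S x xi).
Proof.
move=> hS; rewrite (dxi_Xc _ _ _ _ hS).
rewrite big1 => [|i _]; last by rewrite eq_tq eq_tp !mul0r subr0.
rewrite big1 => [|i _]; last by rewrite eq_tq eq_tp !mulr0 addr0.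
by rewrite eqxx mul1r addr0 mul0r subr0.
Qed.

Definition DopF (g : 'I_D -> R) x xi : R :=
  \sum_i (xi 0 (qI i) * g (pI i) - xi 0 (pI i) * g (qI i))
  + xi 0 tI * \sum_i (x 0 (pI i) * g (pI i) + x 0 (qI i) * g (qI i))
  - Esxi x xi * g tI.

Lemma DopE (S : symb R n) x xi : Dop S x xi = DopF (fun a => dx a S x xi) x xi.
Proof. by []. Qed.

Lemma DopF_lin (u v : R) (g1 g2 : 'I_D -> R) x xi :
  DopF (fun a => u * g1 a + v * g2 a) x xi = u * DopF g1 x xi + v * DopF g2 x xi.
Proof.
rewrite /DopF.
have s1 : \sum_i (xi 0 (qI i) * (u * g1 (pI i) + v * g2 (pI i))
                 - xi 0 (pI i) * (u * g1 (qI i) + v * g2 (qI i)))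
  = u * \sum_i (xi 0 (qI i) * g1 (pI i) - xi 0 (pI i) * g1 (qI i))
  + v * \sum_i (xi 0 (qI i) * g2 (pI i) - xi 0 (pI i) * g2 (qI i)).
  by rewrite !mulr_sumr -big_split; apply: eq_bigr => i _ /=; ring.
have s2 : \sum_i (x 0 (pI i) * (u * g1 (pI i) + v * g2 (pI i))
                 + x 0 (qI i) * (u * g1 (qI i) + v * g2 (qI i)))
  = u * \sum_i (x 0 (pI i) * g1 (pI i) + x 0 (qI i) * g1 (qI i))
  + v * \sum_i (x 0 (pI i) * g2 (pI i) + x 0 (qI i) * g2 (qI i)).
  by rewrite !mulr_sumr -big_split; apply: eq_bigr => i _ /=; ring.
rewrite s1 s2; gen_atoms; ring.
Qed.

Lemma DopF_add (g1 g2 : 'I_D -> R) x xi :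
  DopF (fun a => g1 a + g2 a) x xi = DopF g1 x xi + DopF g2 x xi.
Proof.
have := DopF_lin 1 1 g1 g2 x xi; rewrite !mul1r => <-.
by congr DopF; apply/funext => a; rewrite !mul1r.
Qed.

Lemma DopF_sub (g1 g2 : 'I_D -> R) x xi :
  DopF (fun a => g1 a - g2 a) x xi = DopF g1 x xi - DopF g2 x xi.
Proof.
have := DopF_lin 1 (-1) g1 g2 x xi; rewrite mul1r mulN1r => <-.
by congr DopF; apply/funext => a; rewrite mul1r mulN1r.
Qed.

Lemma DopF_scale (u : R) (g : 'I_D -> R) x xi :
  DopF (fun a => u * g a) x xi = u * DopF g x xi.
Proof.
have := DopF_lin u 0 g g x xi; rewrite mul0r addr0 => <-.
by congr DopF; apply/funext => a; rewrite mul0r addr0.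
Qed.

Lemma DopF_sum (g : 'I_n -> 'I_D -> R) x xi :
  DopF (fun a => \sum_i g i a) x xi = \sum_i DopF (g i) x xi.
Proof.
rewrite /DopF.
have s1 : \sum_i' (xi 0 (qI i') * (\sum_i g i (pI i')) - xi 0 (pI i') * (\sum_i g i (qI i')))
  = \sum_i \sum_i' (xi 0 (qI i') * g i (pI i') - xi 0 (pI i') * g i (qI i')).
  by rewrite exchange_big; apply: eq_bigr => i' _; rewrite !mulr_sumr -sumrB.
have s2 : xi 0 tI * \sum_i' (x 0 (pI i') * (\sum_i g i (pI i')) + x 0 (qI i') * (\sum_i g i (qI i')))
  = \sum_i xi 0 tI * \sum_i' (x 0 (pI i') * g i (pI i') + x 0 (qI i') * g i (qI i')).
  rewrite -mulr_sumr exchange_big; congr (_ * _); apply: eq_bigr => i' _.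
  by rewrite !mulr_sumr -big_split.
have s3 : Esxi x xi * (\sum_i g i tI) = \sum_i Esxi x xi * g i tI by rewrite mulr_sumr.
by rewrite s1 s2 s3 -big_split -sumrB.
Qed.

Lemma DopF_dp (i0 : 'I_n) x xi :
  DopF (fun a => (a == pI i0)%:R) x xi = xi 0 (qI i0) + xi 0 tI * x 0 (pI i0).
Proof.
rewrite /DopF.
rewrite (eq_bigr (fun i => xi 0 (qI i) * (i0 == i)%:R)) => [|i _]; last first.
  by rewrite eq_qp eq_pp eq_sym mulr0 subr0.
rewrite sum_deltar.
rewrite (eq_bigr (fun i => x 0 (pI i) * (i0 == i)%:R)) => [|i _]; last first.
  by rewrite eq_qp eq_pp eq_sym mulr0 addr0.
by rewrite sum_deltar eq_tp mulr0 subr0.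
Qed.

Lemma DopF_dq (i0 : 'I_n) x xi :
  DopF (fun a => (a == qI i0)%:R) x xi = - xi 0 (pI i0) + xi 0 tI * x 0 (qI i0).
Proof.
rewrite /DopF.
rewrite (eq_bigr (fun i => - (xi 0 (pI i) * (i0 == i)%:R))) => [|i _]; last first.
  by rewrite eq_qq eq_pq eq_sym mulr0 add0r.
rewrite sumrN sum_deltar.
rewrite (eq_bigr (fun i => x 0 (qI i) * (i0 == i)%:R)) => [|i _]; last first.
  by rewrite eq_qq eq_pq eq_sym mulr0 add0r.
by rewrite sum_deltar eq_tq mulr0 subr0.
Qed.

Lemma dx_ialpha k (S : symb R n) x xi : Grep k S ->
  (fun a => dx a (ialpha S) x xi) = fun a => 2^-1 * (\sum_i (
     (x 0 (pI i) * dx a (dxi (qI i) S) x xi + dxi (qI i) S x xi * (a == pI i)%:R)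
   - (x 0 (qI i) * dx a (dxi (pI i) S) x xi + dxi (pI i) S x xi * (a == qI i)%:R))
   - dx a (dxi tI S) x xi).
Proof.
move=> hS; apply/funext => a; apply: HD_pdiff.
apply: HD_scale; apply: HD_sub.
  apply: HD_sum => i; apply: HD_sub; apply: HD_mul; try apply: HD_coord;
  apply: HD_G_x; apply: G_dxi; exact: hS.
by apply: HD_G_x; apply: G_dxi; exact: hS.
Qed.

End Calc.
Section Calc.
Variable R : realType.
Variable n : nat.
Local Notation P := (pt R n).
Local Notation D := (dimM n).
Local Notation tI := (tI n).
Implicit Types (f g : P -> R) (y x xi : P).

Lemma DopF_body (u1 u2 v1 v2 : R) (g1 g2 : 'I_D -> R) (i : 'I_n) x xi :
  DopF (fun a => (u1 * g1 a + v1 * (a == pI i)%:R) - (u2 * g2 a + v2 * (a == qI i)%:R)) x xi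
  = (u1 * DopF g1 x xi + v1 * (xi 0 (qI i) + xi 0 tI * x 0 (pI i)))
    - (u2 * DopF g2 x xi + v2 * (- xi 0 (pI i) + xi 0 tI * x 0 (qI i))).
Proof. by rewrite DopF_sub !DopF_lin DopF_dp DopF_dq. Qed.

Lemma Dop_ialpha k (S : symb R n) x xi : Grep k S ->
  Dop (ialpha S) x xi = 2^-1 * (\sum_i (
     (x 0 (pI i) * Dop (dxi (qI i) S) x xi + dxi (qI i) S x xi * (xi 0 (qI i) + xi 0 tI * x 0 (pI i)))
   - (x 0 (qI i) * Dop (dxi (pI i) S) x xi + dxi (pI i) S x xi * (- xi 0 (pI i) + xi 0 tI * x 0 (qI i))))
   - Dop (dxi tI S) x xi).
Proof.
move=> hS; rewrite DopE (dx_ialpha _ _ hS).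
rewrite DopF_scale.
rewrite DopF_sub.
rewrite DopF_sum.
congr (_ * (_ - _)); apply: eq_bigr => i _.
exact: DopF_body.
Qed.
Lemma euler3 k (S : symb R n) x xi : Grep k S ->
  k%:R * S x xi = \sum_i (xi 0 (qI i) * dxi (qI i) S x xi + xi 0 (pI i) * dxi (pI i) S x xi)
    + xi 0 tI * dxi tI S x xi.
Proof. by move=> hS; rewrite -(euler x xi hS) sumD big_split. Qed.

Lemma comm k (S : symb R n) c x xi : Grep k S ->
  ialpha (Xc c S) x xi = Xc (c - 1) (ialpha S) x xi - 2^-1 * (c + k%:R) * S x xi.
Proof.
move=> hS.
have L : ialpha (Xc c S) x xi = 2^-1 * (\sum_i (x 0 (pI i) * (Xc c (dxi (qI i) S) x xi
    + dx (pI i) S x xi - x 0 (qI i) * dx tI S x xi) - x 0 (qI i) * (Xc c (dxi (pI i) S) x xi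
    - dx (qI i) S x xi - x 0 (pI i) * dx tI S x xi))
    - (Xc c (dxi tI S) x xi + (Es S x xi + c * S x xi))).
  rewrite /ialpha (K1t _ _ _ hS); congr (_ * (_ - _)); apply: eq_bigr => i _.
  by rewrite (K1q _ _ _ _ hS) (K1p _ _ _ _ hS).
have Rr : Xc (c - 1) (ialpha S) x xi = 2^-1 * (\sum_i (
     (x 0 (pI i) * Dop (dxi (qI i) S) x xi + dxi (qI i) S x xi * (xi 0 (qI i) + xi 0 tI * x 0 (pI i)))
   - (x 0 (qI i) * Dop (dxi (pI i) S) x xi + dxi (pI i) S x xi * (- xi 0 (pI i) + xi 0 tI * x 0 (qI i))))
   - Dop (dxi tI S) x xi) + (c - 1) * xi 0 tI * (2^-1 * (\sum_i (x 0 (pI i) * dxi (qI i) S x xi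
   - x 0 (qI i) * dxi (pI i) S x xi) - dxi tI S x xi)).
  by rewrite /Xc (Dop_ialpha _ _ hS).
have XcE : forall T, Xc c T x xi = Dop T x xi + c * xi 0 tI * T x xi by [].
rewrite L Rr.
under eq_bigr => i _ do rewrite !XcE.
rewrite XcE.
have EsE : Es S x xi = \sum_i (x 0 (pI i) * dx (pI i) S x xi + x 0 (qI i) * dx (qI i) S x xi) by [].
have s1 : \sum_i (x 0 (pI i) * (Dop (dxi (qI i) S) x xi + c * xi 0 tI * dxi (qI i) S x xi
    + dx (pI i) S x xi - x 0 (qI i) * dx tI S x xi) - x 0 (qI i) * (Dop (dxi (pI i) S) x xi
    + c * xi 0 tI * dxi (pI i) S x xi - dx (qI i) S x xi - x 0 (pI i) * dx tI S x xi))
  = \sum_i (x 0 (pI i) * Dop (dxi (qI i) S) x xi - x 0 (qI i) * Dop (dxi (pI i) S) x xi)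
    + c * xi 0 tI * \sum_i (x 0 (pI i) * dxi (qI i) S x xi - x 0 (qI i) * dxi (pI i) S x xi)
    + Es S x xi.
  by rewrite EsE !mulr_sumr -!big_split; apply: eq_bigr => i _ /=; gen_atoms; ring.
have s2 : \sum_i (
     (x 0 (pI i) * Dop (dxi (qI i) S) x xi + dxi (qI i) S x xi * (xi 0 (qI i) + xi 0 tI * x 0 (pI i)))
   - (x 0 (qI i) * Dop (dxi (pI i) S) x xi + dxi (pI i) S x xi * (- xi 0 (pI i) + xi 0 tI * x 0 (qI i))))
  = \sum_i (x 0 (pI i) * Dop (dxi (qI i) S) x xi - x 0 (qI i) * Dop (dxi (pI i) S) x xi)
    + \sum_i (xi 0 (qI i) * dxi (qI i) S x xi + xi 0 (pI i) * dxi (pI i) S x xi)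
    + xi 0 tI * \sum_i (x 0 (pI i) * dxi (qI i) S x xi - x 0 (qI i) * dxi (pI i) S x xi).
  by rewrite !mulr_sumr -!big_split; apply: eq_bigr => i _ /=; gen_atoms; ring.
rewrite s1 s2.
have E2 : 2^-1 * (c + k%:R) * S x xi = 2^-1 * c * S x xi + 2^-1 * (k%:R * S x xi).
  by rewrite mulrDr mulrDl mulrA.
rewrite E2 (euler3 x xi hS); gen_atoms; ring.
Qed.

Lemma dxi_lin ka kb (A B : symb R n) (lam : R) j x xi : Grep ka A -> Grep kb B ->
  dxi j (fun x xi => A x xi - lam * B x xi) x xi = dxi j A x xi - lam * dxi j B x xi.
Proof.
move=> hA hB; apply: HD_pdiff; apply: HD_sub; first exact: HD_G_xi hA.
by apply: HD_scale; apply: HD_G_xi hB.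
Qed.

Lemma ialpha_lin ka kb (A B : symb R n) (lam : R) : Grep ka A -> Grep kb B ->
  ialpha (fun x xi => A x xi - lam * B x xi) = fun x xi => ialpha A x xi - lam * ialpha B x xi.
Proof.
move=> hA hB; apply/funext => x; apply/funext => xi.
transitivity (ialpha A x xi - lam * ialpha B x xi); last by [].
have eA : ialpha A x xi = 2^-1 * (\sum_i (x 0 (pI i) * dxi (qI i) A x xi
    - x 0 (qI i) * dxi (pI i) A x xi) - dxi tI A x xi) by [].
have eB : ialpha B x xi = 2^-1 * (\sum_i (x 0 (pI i) * dxi (qI i) B x xi
    - x 0 (qI i) * dxi (pI i) B x xi) - dxi tI B x xi) by [].
rewrite eA eB {1}/ialpha.
under eq_bigr => i _ do rewrite !(dxi_lin _ _ _ _ hA hB).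
rewrite (dxi_lin _ _ _ _ hA hB).
have s : \sum_i (x 0 (pI i) * (dxi (qI i) A x xi - lam * dxi (qI i) B x xi)
    - x 0 (qI i) * (dxi (pI i) A x xi - lam * dxi (pI i) B x xi))
  = \sum_i (x 0 (pI i) * dxi (qI i) A x xi - x 0 (qI i) * dxi (pI i) A x xi)
    - lam * \sum_i (x 0 (pI i) * dxi (qI i) B x xi - x 0 (qI i) * dxi (pI i) B x xi).
  by rewrite mulr_sumr -sumrB; apply: eq_bigr => i _; gen_atoms; ring.
rewrite s; gen_atoms; ring.
Qed.

Lemma iter_lin m ka kb (A B : symb R n) (lam : R) : Grep ka A -> Grep kb B ->
  forall x xi, iter m (@ialpha R n) (fun x xi => A x xi - lam * B x xi) x xi
    = iter m (@ialpha R n) A x xi - lam * iter m (@ialpha R n) B x xi.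
Proof.
elim: m ka kb A B => [|m IH] ka kb A B hA hB x xi; first by [].
rewrite !iterSr (ialpha_lin _ hA hB).
exact: IH (G_ialpha hA) (G_ialpha hB) x xi.
Qed.

Lemma dx_zero a x xi : dx a (fun _ _ : P => 0) x xi = 0.
Proof. by apply: HD_pdiff; apply: HD_cst. Qed.

Lemma dxi_zero j x xi : dxi j (fun _ _ : P => 0) x xi = 0.
Proof. by apply: HD_pdiff; apply: HD_cst. Qed.

Lemma Xc_zero c : Xc c (fun _ _ : P => 0) = fun _ _ => 0.
Proof.
apply/funext => x; apply/funext => xi; rewrite /Xc DopE.
rewrite (_ : (fun a => dx a (fun _ _ : P => 0) x xi) = fun a => 0 * 0); last first.
  by apply/funext => a; rewrite dx_zero mulr0.
by rewrite (DopF_scale 0 (fun _ => 0)) !mul0r mulr0 addr0.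
Qed.

Lemma ialpha_zero : ialpha (fun _ _ : P => 0) = fun _ _ => 0.
Proof.
apply/funext => x; apply/funext => xi; rewrite /ialpha.
under eq_bigr => i _ do rewrite !dxi_zero.
rewrite dxi_zero big1 => [|i _]; last by rewrite !mulr0 subr0.
by rewrite subrr mulr0.
Qed.

Lemma dxi_G0 (S : symb R n) j x xi : Grep 0 S -> dxi j S x xi = 0.
Proof.
case=> I [c [e [h ->]]]; rewrite dxi_repv /= big1 // => i _; rewrite /dmon.
have := le_deg (e i) j; rewrite (h i).2 leqn0 => /eqP ->.
by rewrite !mul0r mulr0.
Qed.

Lemma ialpha0 (S : symb R n) : Grep 0 S -> ialpha S = fun _ _ => 0.
Proof.
move=> hS; apply/funext => x; apply/funext => xi; rewrite /ialpha.
under eq_bigr => i _ do rewrite !(dxi_G0 _ _ _ hS).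
rewrite (dxi_G0 _ _ _ hS) big1 => [|i _]; last by rewrite !mulr0 subr0.
by rewrite subrr mulr0.
Qed.

Lemma kerX (delta : R) m : forall d (S : symb R n), Grep d S ->
  (forall x xi, iter m (@ialpha R n) S x xi = 0) ->
  forall x xi, iter m.+1 (@ialpha R n) (Xop delta d S) x xi = 0.
Proof.
elim: m => [|m IH] d S hS h0 x xi.
  have -> : S = (fun _ _ => 0) by apply/funext => y; apply/funext => z; exact: h0.
  have -> : Xop delta d (fun _ _ : P => 0) = fun _ _ => 0 := Xc_zero _.
  by rewrite /= ialpha_zero.
set lam := 2^-1 * ((2 * (n.+1)%:R * delta + d%:R) + d%:R).
have e : ialpha (Xop delta d S) = fun x xi => Xop delta d.-1 (ialpha S) x xi - lam * S x xi.
  apply/funext => y; apply/funext => z.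
  change (ialpha (Xc (2 * (n.+1)%:R * delta + d%:R) S) y z = Xop delta d.-1 (ialpha S) y z - lam * S y z).
  rewrite (comm (2 * (n.+1)%:R * delta + d%:R) y z hS); congr (_ - _).
  case: d hS {h0 lam} => [|d'] hS /=.
    rewrite (ialpha0 hS) Xc_zero.
    by have -> : Xop delta 0 (fun _ _ : P => 0) = fun _ _ => 0 := Xc_zero _.
  change (Xc (2 * (n.+1)%:R * delta + d'.+1%:R - 1) (ialpha S) y z
    = Xc (2 * (n.+1)%:R * delta + d'%:R) (ialpha S) y z).
  by congr (Xc _ _ y z); rewrite -[(d'.+1)%:R]natr1 addrA addrK.
have hA : Grep (d.-1).+1 (Xop delta d.-1 (ialpha S)) := G_Xc _ (G_ialpha hS).
rewrite iterSr e (iter_lin m.+1 lam hA hS).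
have h1 : forall x xi, iter m (@ialpha R n) (ialpha S) x xi = 0.
  by move=> y z; rewrite -iterSr; exact: h0.
by rewrite (IH _ _ (G_ialpha hS) h1) h0 mulr0 subr0.
Qed.

End Calc.

Unset Implicit Arguments.

Theorem proposition6p1 (R : realType) (n : nat) (delta : R) (k l : nat) :
  (1 <= n)%N -> (1 <= k)%N -> (1 <= l <= k.+1)%N ->
  (forall S : symb R n, Fkl k l S -> Fkl (k.-1) (l.-1) (ialpha S)) /\
  (forall S : symb R n, Fkl (k.-1) (l.-1) S -> Fkl k l (Xop delta (k.-1) S)).
Proof.
move=> _ hk /andP [hl _]; split => S [hR h0].
- split; first by apply: G_Rk; apply: G_ialpha; apply: Rk_G.
  case: l hl h0 => // l' _ h0 x xi /=; rewrite -iterSr; exact: h0.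
- split.
    apply: G_Rk; have h := G_Xc (2 * (n.+1)%:R * delta + (k.-1)%:R) (Rk_G hR).
    by rewrite prednK // in h.
  case: l hl h0 => // l' _ h0 x xi.
  exact (kerX delta (m := l') (Rk_G hR) h0 x xi).
Qed.
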